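(* Let $X$ be a topological space in which every open set is a union of countably many clopen sets. Then $C_p(X)$ is an $\alpha_1$ space if, and only if, for every Borel function $\Psi:X\to\mathbb{N}^{\mathbb{N}}$ the image $\Psi[X]$ is bounded.
   Context: $C_p(X)$ is the set of continuous real-valued functions on $X$ with the topology of pointwise convergence (subspace of $\mathbb{R}^X$). In a topological space $Y$, a countable set $A$ of distinct points converges to $y$ if some (equivalently every) bijective enumeration of $A$ converges to $y$. $Y$ is an $\alpha_1$ space if for each $y\in Y$ and each sequence $A_1,A_2,\dots$ of countably infinite sets each converging to $y$, there are cofinite subsets $B_n\subseteq A_n$ such that $\bigcup_n B_n$ converges to $y$. A function $\Psi:X\to\mathbb{N}^{\mathbb{N}}$ is Borel if preimages of open sets are Borel in $X$. A set $Y\subseteq\mathbb{N}^{\mathbb{N}}$ is bounded if there is $g\in\mathbb{N}^{\mathbb{N}}$ such that for each $f\in Y$, $f(n)\le g(n)$ for all but finitely many $n$. *)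

(* Defs.v *)
From Stdlib Require Import Reals List.
Local Open Scope R_scope.

Record topology (X : Type) := Topology {
  open : (X -> Prop) -> Prop;
  open_full : open (fun _ => True);
  open_inter : forall U V, open U -> open V -> open (fun x => U x /\ V x);
  open_union : forall F : (X -> Prop) -> Prop,
      (forall U, F U -> open U) -> open (fun x => exists U, F U /\ U x);
  open_ext : forall U V, (forall x, U x <-> V x) -> open U -> open V
}.
Arguments open {X} _ _.

Definition clopen {X} (T : topology X) (U : X -> Prop) : Prop :=
  open T U /\ open T (fun x => ~ U x).

Definition open_countable_union_clopen {X} (T : topology X) : Prop :=
  forall U, open T U ->
    exists C : nat -> X -> Prop,
      (forall n, clopen T (C n)) /\ (forall x, U x <-> exists n, C n x).

Definition R_open (U : R -> Prop) : Prop :=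
  forall x, U x -> exists eps, eps > 0 /\ forall y, Rabs (y - x) < eps -> U y.

Definition continuous {X} (T : topology X) (f : X -> R) : Prop :=
  forall U, R_open U -> open T (fun x => U (f x)).

Definition Cp {X} (T : topology X) : Type := { f : X -> R | continuous T f }.

(** Open sets of C_p(X): the subspace topology inherited from R^X with the
    product (Tychonoff) topology, i.e. generated by the basic sets
    { g | |g x - f x| < eps for x in a finite list }. *)
Definition cp_open {X} (T : topology X) (V : Cp T -> Prop) : Prop :=
  forall f, V f -> exists (xs : list X) (eps : R), eps > 0 /\
    forall g : Cp T,
      (forall x, In x xs -> Rabs (proj1_sig g x - proj1_sig f x) < eps) -> V g.

Definition seq_converges {S : Type} (opn : (S -> Prop) -> Prop)
  (s : nat -> S) (y : S) : Prop :=
  forall V, opn V -> V y -> exists N, forall k, (N <= k)%nat -> V (s k).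

(** A countable set A of distinct points converges to y: some bijective
    enumeration nat -> A converges to y (A is countably infinite). *)
Definition converges_set {S : Type} (opn : (S -> Prop) -> Prop)
  (A : S -> Prop) (y : S) : Prop :=
  exists e : nat -> S,
    (forall m n, e m = e n -> m = n) /\
    (forall z, A z <-> exists n, e n = z) /\
    seq_converges opn e y.

Definition cofinite_subset {S : Type} (B A : S -> Prop) : Prop :=
  (forall z, B z -> A z) /\
  exists l : list S, forall z, A z -> ~ B z -> In z l.

Definition alpha1 {S : Type} (opn : (S -> Prop) -> Prop) : Prop :=
  forall (y : S) (A : nat -> S -> Prop),
    (forall n, converges_set opn (A n) y) ->
    exists B : nat -> S -> Prop,
      (forall n, cofinite_subset (B n) (A n)) /\
      converges_set opn (fun z => exists n, B n z) y.

Definition baire_open (U : (nat -> nat) -> Prop) : Prop :=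
  forall f, U f -> exists n, forall g,
    (forall i, (i < n)%nat -> g i = f i) -> U g.

Inductive borel {X} (T : topology X) : (X -> Prop) -> Prop :=
  | borel_open : forall U, open T U -> borel T U
  | borel_compl : forall A, borel T A -> borel T (fun x => ~ A x)
  | borel_cunion : forall A : nat -> X -> Prop,
      (forall n, borel T (A n)) -> borel T (fun x => exists n, A n x)
  | borel_ext : forall A B, (forall x, A x <-> B x) -> borel T A -> borel T B.

Definition borel_function {X} (T : topology X) (Psi : X -> nat -> nat) : Prop :=
  forall U, baire_open U -> borel T (fun x => U (Psi x)).

Definition baire_bounded (Y : (nat -> nat) -> Prop) : Prop :=
  exists g : nat -> nat, forall f, Y f ->
    exists N, forall n, (N <= n)%nat -> (f n <= g n)%nat.

(* Main.v *)
Require Import Defs.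
From Stdlib Require Import Reals List.
From Stdlib Require Import Lia Lra Classical ClassicalEpsilon Cantor Wf_nat.
Local Open Scope R_scope.
Arguments open_ext {X}. Arguments open_union {X}. Arguments open_full {X}. Arguments open_inter {X}.


Lemma least_ex (P : nat -> Prop) :
  (exists m, P m) -> exists m, P m /\ forall k, P k -> (m <= k)%nat.
Proof.
  intros [m Hm].
  revert Hm. induction m as [m IH] using (well_founded_induction Wf_nat.lt_wf).
  intros Hm.
  destruct (classic (exists k, (k < m)%nat /\ P k)) as [[k [Hk Pk]]|Hn].
  - exact (IH k Hk Pk).
  - exists m. split; auto. intros k Pk.
    destruct (Nat.le_gt_cases m k); auto. exfalso; apply Hn; eauto.
Qed.

Lemma inj_avoid_list {Sp : Type} (e : nat -> Sp) (l : list Sp) :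
  (forall m n, e m = e n -> m = n) ->
  exists K, forall k, (K <= k)%nat -> ~ In (e k) l.
Proof.
  intros Hinj. induction l as [|a l IH].
  - exists 0%nat. intros k _ H; inversion H.
  - destruct IH as [K HK].
    destruct (classic (exists k0, e k0 = a)) as [[k0 Hk0]|Hn].
    + exists (Nat.max K (S k0)). intros k Hk [H|H].
      * subst a. apply Hinj in H. lia.
      * apply (HK k); auto; lia.
    + exists K. intros k Hk [H|H]; [apply Hn; eauto | apply (HK k); auto].
Qed.

Lemma pigeon (N : nat) : forall (Bad : nat -> Prop) (R : nat -> nat -> Prop),
  (forall n, Bad n -> exists i, (i < N)%nat /\ R n i) ->
  (forall n n' i, R n i -> R n' i -> n = n') ->
  exists M, forall n, (M <= n)%nat -> ~ Bad n.
Proof.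
  induction N as [|N IH]; intros Bad R H1 H2.
  - exists 0%nat. intros n _ Hb. destruct (H1 n Hb) as [i [Hi _]]. lia.
  - destruct (classic (exists n0, Bad n0 /\ R n0 N)) as [[n0 [Hb0 Hr0]]|Hn].
    + destruct (IH (fun n => Bad n /\ ~ R n N) R) as [M HM].
      * intros n [Hb Hr]. destruct (H1 n Hb) as [i [Hi Hri]].
        exists i. split; auto. destruct (Nat.eq_dec i N); [subst; contradiction|lia].
      * exact H2.
      * exists (Nat.max M (S n0)). intros n Hn Hb.
        destruct (classic (R n N)) as [Hr|Hr].
        -- pose proof (H2 _ _ _ Hr Hr0). lia.
        -- apply (HM n); [lia|auto].
    + apply (IH Bad R); auto.
      intros n Hb. destruct (H1 n Hb) as [i [Hi Hri]]. exists i. split; auto.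
      destruct (Nat.eq_dec i N); [subst; exfalso; apply Hn; eauto|lia].
Qed.

Lemma enum_inf (P : nat -> Prop) :
  (forall M, exists m, (M <= m)%nat /\ P m) ->
  exists f : nat -> nat, (forall i, P (f i)) /\ (forall i, (f i < f (S i))%nat) /\
    (forall m, P m -> exists i, f i = m).
Proof.
  intros HP.
  assert (Hl : forall M, exists m, ((M <= m)%nat /\ P m) /\
             forall k, ((M <= k)%nat /\ P k) -> (m <= k)%nat).
  { intros M. apply least_ex. apply HP. }
  pose (nx := fun M => proj1_sig (constructive_indefinite_description _ (Hl M))).
  assert (Hnx : forall M, ((M <= nx M)%nat /\ P (nx M)) /\
                 forall k, ((M <= k)%nat /\ P k) -> (nx M <= k)%nat).
  { intros M. unfold nx. destruct (constructive_indefinite_description _ (Hl M)); auto. }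
  pose (f := fix f i := match i with O => nx 0%nat | S i => nx (S (f i)) end).
  exists f. split; [|split].
  - intros [|i]; simpl; apply Hnx.
  - intros i. simpl. destruct (Hnx (S (f i))) as [[H _] _]. lia.
  - assert (Hge : forall i, (i <= f i)%nat).
    { induction i; simpl. lia. destruct (Hnx (S (f i))) as [[H _] _]. lia. }
    assert (Hc : forall i m, P m -> (m <= f i)%nat -> exists j, f j = m).
    { induction i; intros m Pm Hm.
      - exists 0%nat. simpl in *. destruct (Hnx 0%nat) as [_ H].
        specialize (H m (conj (Nat.le_0_l _) Pm)). lia.
      - destruct (Nat.le_gt_cases m (f i)) as [H|H]; [apply (IHi m Pm H)|].
        exists (S i). simpl in *. destruct (Hnx (S (f i))) as [_ H'].
        specialize (H' m (conj H Pm)). lia. }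
    intros m Pm. apply (Hc m m Pm (Hge m)).
Qed.

Lemma inj_enum {Sp : Type} (U : Sp -> Prop) (s : nat -> Sp) (d : nat -> Sp) :
  (forall m, U (s m)) -> (forall u, U u -> exists m, s m = u) ->
  (forall j, U (d j)) -> (forall i j, d i = d j -> i = j) ->
  exists e : nat -> Sp, (forall m n, e m = e n -> m = n) /\
    (forall z, U z <-> exists n, e n = z).
Proof.
  intros Hs Hsur Hd Hdi.
  pose (First := fun m => forall m', (m' < m)%nat -> s m' <> s m).
  assert (Hfirst : forall u, U u -> exists m, s m = u /\ First m).
  { intros u Hu. destruct (least_ex (fun m => s m = u) (Hsur u Hu)) as [m [Hm Hmin]].
    exists m. split; auto. intros m' Hm' Heq. specialize (Hmin m'). rewrite Heq in Hmin.
    specialize (Hmin Hm). lia. }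
  destruct (enum_inf First) as [f [Hf1 [Hf2 Hf3]]].
  { intros M. destruct (inj_avoid_list d (map s (seq 0 M)) Hdi) as [K HK].
    destruct (Hfirst (d K) (Hd K)) as [m [Hm Hfm]].
    exists m. split; auto. destruct (Nat.le_gt_cases M m) as [H|H]; auto.
    exfalso. apply (HK K); auto. rewrite <- Hm. apply in_map. apply in_seq. lia. }
  assert (Hmono : forall i j, (i < j)%nat -> (f i < f j)%nat).
  { intros i j Hij. induction Hij. apply Hf2. specialize (Hf2 m). lia. }
  exists (fun i => s (f i)). split.
  - intros m n Heq. destruct (Nat.lt_total m n) as [H|[H|H]]; auto.
    + exfalso. apply (Hf1 n (f m)); auto.
    + exfalso. apply (Hf1 m (f n)); auto.
  - intros z. split.
    + intros Hz. destruct (Hfirst z Hz) as [m [Hm Hfm]]. destruct (Hf3 m Hfm) as [i Hi].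
      exists i. rewrite Hi; auto.
    + intros [n Hn]. subst. apply Hs.
Qed.

Lemma open_empty {X} (T : topology X) : open T (fun _ => False).
Proof.
  apply (open_ext T (fun x => exists U, (fun _ : X -> Prop => False) U /\ U x)).
  - intros x; split; [intros [U [[] _]]| intros []].
  - apply open_union. intros U [].
Qed.

Lemma open_union2 {X} (T : topology X) U V : open T U -> open T V ->
  open T (fun x => U x \/ V x).
Proof.
  intros HU HV.
  apply (open_ext T (fun x => exists W, (W = U \/ W = V) /\ W x)).
  - intros x; split.
    + intros [W [[E|E] H]]; subst W; auto.
    + intros [H|H]; eauto.
  - apply open_union. intros W [H|H]; subst W; auto.
Qed.

Lemma clopen_ext {X} (T : topology X) U V : (forall x, U x <-> V x) -> clopen T U -> clopen T V.
Proof.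
  intros H [H1 H2]. split.
  - eapply open_ext; eauto.
  - eapply open_ext; [|exact H2]. intros x; specialize (H x); tauto.
Qed.

Lemma clopen_compl {X} (T : topology X) U : clopen T U -> clopen T (fun x => ~ U x).
Proof.
  intros [H1 H2]. split; auto. eapply open_ext; [|exact H1]. intros x; tauto.
Qed.

Lemma clopen_full {X} (T : topology X) : clopen T (fun _ => True).
Proof. split. apply open_full. eapply open_ext; [|apply open_empty]. intros; tauto. Qed.

Lemma clopen_inter {X} (T : topology X) U V : clopen T U -> clopen T V ->
  clopen T (fun x => U x /\ V x).
Proof.
  intros [H1 H2] [H3 H4]. split. apply open_inter; auto.
  eapply open_ext; [|apply (open_union2 T _ _ H2 H4)]. intros x; tauto.
Qed.

Lemma clopen_union2 {X} (T : topology X) U V : clopen T U -> clopen T V ->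
  clopen T (fun x => U x \/ V x).
Proof.
  intros H1 H2. apply (clopen_ext T (fun x => ~ (~ U x /\ ~ V x))).
  - intros x; tauto.
  - apply clopen_compl, clopen_inter; apply clopen_compl; auto.
Qed.

Lemma clopen_iff {X} (T : topology X) U V : clopen T U -> clopen T V ->
  clopen T (fun x => U x <-> V x).
Proof.
  intros H1 H2. apply (clopen_ext T (fun x => (U x /\ V x) \/ (~ U x /\ ~ V x))).
  - intros x; tauto.
  - apply clopen_union2; apply clopen_inter; auto; apply clopen_compl; auto.
Qed.

Lemma borel_full {X} (T : topology X) : borel T (fun _ => True).
Proof. apply borel_open, open_full. Qed.

Lemma borel_empty {X} (T : topology X) : borel T (fun _ => False).
Proof. apply borel_open, open_empty. Qed.

Lemma borel_union2 {X} (T : topology X) A B : borel T A -> borel T B ->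
  borel T (fun x => A x \/ B x).
Proof.
  intros HA HB.
  apply (borel_ext T (fun x => exists n, (fun n => match n with O => A | _ => B end) n x)).
  - intros x; split.
    + intros [[|n] H]; auto.
    + intros [H|H]; [exists O|exists (S O)]; auto.
  - apply borel_cunion. intros [|n]; auto.
Qed.

Lemma borel_inter {X} (T : topology X) A B : borel T A -> borel T B ->
  borel T (fun x => A x /\ B x).
Proof.
  intros HA HB. apply (borel_ext T (fun x => ~ (~ A x \/ ~ B x))).
  - intros x; tauto.
  - apply borel_compl, borel_union2; apply borel_compl; auto.
Qed.

Lemma borel_dep {X} (T : topology X) (Phi : X -> nat -> nat) :
  (forall i v, borel T (fun x => Phi x i = v)) ->
  forall n (P : (nat -> nat) -> Prop),
    (forall f g, (forall i, (i < n)%nat -> f i = g i) -> P f -> P g) ->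
    borel T (fun x => P (Phi x)).
Proof.
  intros HPhi n. induction n as [|n IH]; intros P HP.
  - destruct (classic (exists f, P f)) as [[f Hf]|Hn].
    + eapply borel_ext; [|apply borel_full]. intros x; split; auto.
      intros _. apply (HP f); auto. intros; lia.
    + eapply borel_ext; [|apply borel_empty]. intros x; split; [intros []|].
      intros H; apply Hn; eauto.
  - pose (upd := fun (v : nat) (f : nat -> nat) => fun i => if Nat.eqb i n then v else f i).
    apply (borel_ext T (fun x => exists v, (fun v x => Phi x n = v /\ P (upd v (Phi x))) v x)).
    + intros x; split.
      * intros [v [Hv H]]. subst v. apply (HP (upd (Phi x n) (Phi x))); auto.
        intros i _. unfold upd. destruct (Nat.eqb_spec i n); subst; auto.
      * intros H. exists (Phi x n). split; auto. apply (HP (Phi x)); auto.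
        intros i _. unfold upd. destruct (Nat.eqb_spec i n); subst; auto.
    + apply borel_cunion. intros v. apply borel_inter; auto.
      apply (IH (fun f => P (upd v f))).
      intros f g Hfg. apply HP. intros i Hi. unfold upd.
      destruct (Nat.eqb_spec i n); auto. apply Hfg. lia.
Qed.

Lemma borel_function_crit {X} (T : topology X) (Phi : X -> nat -> nat) :
  (forall i v, borel T (fun x => Phi x i = v)) -> borel_function T Phi.
Proof.
  intros HPhi U HU.
  apply (borel_ext T (fun x => exists n,
     (fun n x => forall g, (forall i, (i < n)%nat -> g i = Phi x i) -> U g) n x)).
  - intros x; split.
    + intros [n Hn]. apply Hn. auto.
    + intros Hx. destruct (HU _ Hx) as [n Hn]. exists n. exact Hn.
  - apply borel_cunion. intros n.
    apply (borel_dep T Phi HPhi n (fun f => forall g, (forall i, (i < n)%nat -> g i = f i) -> U g)).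
    intros f g Hfg H h Hh. apply H. intros i Hi. rewrite Hh; auto. symmetry; auto.
Qed.

Definition Pprop {X} (Cl : (X -> Prop) -> Prop) : Prop :=
  forall C : nat -> nat -> X -> Prop, (forall n k, Cl (C n k)) ->
    (forall n x, exists K, forall k, (K <= k)%nat -> C n k x) ->
    exists g : nat -> nat, forall x, exists N, forall n, (N <= n)%nat ->
      forall k, (g n <= k)%nat -> C n k x.

Definition L1 {X} (T : topology X) (A : X -> Prop) : Prop :=
  exists C : nat -> X -> Prop, (forall j, clopen T (C j)) /\
    forall x, exists J, forall j, (J <= j)%nat -> (C j x <-> A x).

Lemma L1_ext {X} (T : topology X) A B : (forall x, A x <-> B x) -> L1 T A -> L1 T B.
Proof.
  intros H [C [HC HC2]]. exists C. split; auto. intros x. destruct (HC2 x) as [J HJ].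
  exists J. intros j Hj. rewrite <- H. auto.
Qed.

Lemma L1_clopen {X} (T : topology X) A : clopen T A -> L1 T A.
Proof. intros H. exists (fun _ => A). split; auto. intros x; exists O; tauto. Qed.

Lemma L1_compl {X} (T : topology X) A : L1 T A -> L1 T (fun x => ~ A x).
Proof.
  intros [C [HC HC2]]. exists (fun j x => ~ C j x). split.
  - intros j; apply clopen_compl; auto.
  - intros x. destruct (HC2 x) as [J HJ]. exists J. intros j Hj. specialize (HJ j Hj). tauto.
Qed.

Lemma L1_union2 {X} (T : topology X) A B : L1 T A -> L1 T B -> L1 T (fun x => A x \/ B x).
Proof.
  intros [C [HC HC2]] [D [HD HD2]]. exists (fun j x => C j x \/ D j x). split.
  - intros j; apply clopen_union2; auto.
  - intros x. destruct (HC2 x) as [J HJ]. destruct (HD2 x) as [J' HJ'].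
    exists (Nat.max J J'). intros j Hj. specialize (HJ j ltac:(lia)). specialize (HJ' j ltac:(lia)). tauto.
Qed.

Lemma good_family {X} (T : topology X) : Pprop (clopen T) ->
  forall B : nat -> X -> Prop, (forall j, L1 T (B j)) ->
  exists D : nat -> X -> Prop, (forall j, clopen T (D j)) /\
    forall x, exists J, forall j, (J <= j)%nat -> (D j x <-> B j x).
Proof.
  intros HP B HB.
  pose (C := fun j => proj1_sig (constructive_indefinite_description _ (HB j))).
  assert (HC : forall j, (forall i, clopen T (C j i)) /\
     forall x, exists J, forall i, (J <= i)%nat -> (C j i x <-> B j x)).
  { intros j. unfold C. destruct (constructive_indefinite_description _ (HB j)); auto. }
  destruct (HP (fun j i x => C j i x <-> C j (S i) x)) as [h Hh].
  - intros j i. apply clopen_iff; apply HC.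
  - intros j x. destruct (proj2 (HC j) x) as [J HJ]. exists J. intros k Hk.
    rewrite (HJ k Hk), (HJ (S k) ltac:(lia)). tauto.
  - exists (fun j => C j (h j)). split; [intros j; apply HC|].
    intros x. destruct (Hh x) as [N HN]. exists N. intros j Hj.
    destruct (proj2 (HC j) x) as [I HI].
    assert (Hstab : forall d, C j (h j + d)%nat x <-> C j (h j) x).
    { induction d. rewrite Nat.add_0_r; tauto.
      rewrite <- IHd. replace (h j + S d)%nat with (S (h j + d)) by lia.
      symmetry. apply (HN j Hj). lia. }
    rewrite <- (Hstab I). apply HI. lia.
Qed.

Lemma L1_cunion {X} (T : topology X) : Pprop (clopen T) ->
  forall B : nat -> X -> Prop, (forall j, L1 T (B j)) -> L1 T (fun x => exists n, B n x).
Proof.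
  intros HP B HB.
  pose (G := fun j x => exists i, (i <= j)%nat /\ B i x).
  assert (HG : forall j, L1 T (G j)).
  { induction j.
    - apply (L1_ext T (B 0%nat)); auto. intros x; split.
      + intros H; exists 0%nat; split; auto.
      + intros [i [Hi H]]. replace i with 0%nat in H by lia; auto.
    - apply (L1_ext T (fun x => G j x \/ B (S j) x)); [|apply L1_union2; auto].
      intros x; split.
      + intros [[i [Hi H]]|H]; exists i || exists (S j); split; auto; lia.
      + intros [i [Hi H]]. destruct (Nat.eq_dec i (S j)); [subst; auto|].
        left; exists i; split; auto; lia. }
  destruct (good_family T HP G HG) as [D [HD HD2]].
  exists D. split; auto. intros x. destruct (HD2 x) as [J HJ].
  destruct (classic (exists n, B n x)) as [[n Hn]|Hn].
  - exists (Nat.max J n). intros j Hj. rewrite (HJ j ltac:(lia)). split; eauto.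
    intros _. exists n; split; auto; lia.
  - exists J. intros j Hj. rewrite (HJ j Hj). split.
    + intros [i [_ H]]; eauto.
    + intros H; exfalso; auto.
Qed.

Lemma borel_L1 {X} (T : topology X) : open_countable_union_clopen T -> Pprop (clopen T) ->
  forall A, borel T A -> L1 T A.
Proof.
  intros HX HP A HA. induction HA.
  - destruct (HX U H) as [C [HC HC2]].
    apply (L1_ext T (fun x => exists n, C n x)); [intros x; rewrite HC2; tauto|].
    apply L1_cunion; auto. intros j; apply L1_clopen; auto.
  - apply L1_compl; auto.
  - apply L1_cunion; auto.
  - eapply L1_ext; eauto.
Qed.

Lemma Pprop_L1 {X} (T : topology X) : Pprop (clopen T) -> Pprop (L1 T).
Proof.
  intros HP A HA Hlim.
  pose (B := fun m => A (fst (of_nat m)) (snd (of_nat m))).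
  destruct (good_family T HP B) as [D [HD HD2]].
  { intros m; apply HA. }
  destruct (HP (fun n k => D (to_nat (n, k)))) as [g Hg].
  - intros n k; auto.
  - intros n x. destruct (Hlim n x) as [K HK]. destruct (HD2 x) as [J HJ].
    exists (Nat.max K J). intros k Hk. rewrite HJ.
    + unfold B. rewrite cancel_of_to. simpl. apply HK. lia.
    + pose proof (to_nat_non_decreasing n k). lia.
  - exists g. intros x. destruct (Hg x) as [N HN]. destruct (HD2 x) as [J HJ].
    exists (Nat.max N J). intros n Hn k Hk.
    specialize (HN n ltac:(lia) k Hk). rewrite HJ in HN.
    + unfold B in HN. rewrite cancel_of_to in HN. exact HN.
    + pose proof (to_nat_non_decreasing n k). lia.
Qed.

Lemma bounded_from_P {X} (T : topology X) : open_countable_union_clopen T -> Pprop (clopen T) ->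
  forall Psi : X -> nat -> nat, borel_function T Psi ->
     baire_bounded (fun f : nat -> nat => exists x : X, Psi x = f).
Proof.
  intros HX HP Psi HPsi.
  destruct (Pprop_L1 T HP (fun n k x => (Psi x n <= k)%nat)) as [g Hg].
  - intros n k. apply borel_L1; auto.
    apply (HPsi (fun f => (f n <= k)%nat)).
    intros f Hf. exists (S n). intros h Hh. rewrite Hh; auto.
  - intros n x. exists (Psi x n). auto.
  - exists g. intros f [x <-]. destruct (Hg x) as [N HN]. exists N. intros n Hn.
    apply (HN n Hn). auto.
Qed.

Lemma small_eventually (eps : R) : 0 < eps ->
  exists K, forall k, (K <= k)%nat -> / (INR k + 1) < eps.
Proof.
  intros He. destruct (archimed_cor1 eps He) as [N [HN HN0]]. exists N. intros k Hk.
  apply Rle_lt_trans with (/ INR N); auto.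
  apply Rinv_le_contravar. apply lt_0_INR; auto.
  apply le_INR in Hk. lra.
Qed.

Lemma list_eventually {Y : Type} (Q : nat -> Y -> Prop) (xs : list Y) :
  (forall x, In x xs -> exists K, forall k, (K <= k)%nat -> Q k x) ->
  exists K, forall k, (K <= k)%nat -> forall x, In x xs -> Q k x.
Proof.
  induction xs as [|a xs IH]; intros H.
  - exists O. intros k _ x [].
  - destruct IH as [K HK]. { intros x Hx; apply H; right; auto. }
    destruct (H a (or_introl eq_refl)) as [K' HK'].
    exists (Nat.max K K'). intros k Hk x [<-|Hx].
    + apply HK'; lia.
    + apply HK; auto; lia.
Qed.

Lemma cont_const {X} (T : topology X) (c : R) : continuous T (fun _ => c).
Proof.
  intros U HU. destruct (classic (U c)) as [H|H].
  - eapply open_ext; [|apply open_full]. intros; tauto.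
  - eapply open_ext; [|apply open_empty]. intros; tauto.
Qed.

Lemma cont_ind {X} (T : topology X) (D : X -> Prop) (a b : R) : clopen T D ->
  continuous T (fun x => if excluded_middle_informative (D x) then a else b).
Proof.
  intros [HD1 HD2] U HU.
  apply (open_ext T (fun x => (D x /\ U a) \/ (~ D x /\ U b))).
  - intros x. destruct (excluded_middle_informative (D x)); tauto.
  - apply open_union2.
    + destruct (classic (U a)).
      * eapply open_ext; [|exact HD1]. intros; tauto.
      * eapply open_ext; [|apply open_empty]. intros; tauto.
    + destruct (classic (U b)).
      * eapply open_ext; [|exact HD2]. intros; tauto.
      * eapply open_ext; [|apply open_empty]. intros; tauto.
Qed.

Lemma cp_open_ball {X} (T : topology X) (x : X) (y : Cp T) (d : R) :
  cp_open T (fun f => Rabs (proj1_sig f x - proj1_sig y x) < d).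
Proof.
  intros f Hf. exists (x :: nil), (d - Rabs (proj1_sig f x - proj1_sig y x)). split; [lra|].
  intros g Hg. specialize (Hg x (or_introl eq_refl)).
  pose proof (Rabs_triang (proj1_sig g x - proj1_sig f x) (proj1_sig f x - proj1_sig y x)).
  replace (proj1_sig g x - proj1_sig f x + (proj1_sig f x - proj1_sig y x))
    with (proj1_sig g x - proj1_sig y x) in H by ring. lra.
Qed.

Lemma alpha1_P {X} (T : topology X) : alpha1 (cp_open T) -> Pprop (clopen T).
Proof.
  intros Ha C HC Hlim.
  destruct (classic (inhabited X)) as [[x0]|Hne];
    [|exists (fun _ => O); intros x; exfalso; apply Hne; constructor; auto].
  pose (c := fun n k => / (INR (to_nat (n, k)) + 2)).
  assert (Hc : forall n k, 0 < c n k <= / 2).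
  { intros n k. unfold c. pose proof (pos_INR (to_nat (n,k))). split.
    apply Rinv_0_lt_compat; lra. apply Rinv_le_contravar; lra. }
  assert (Hck : forall n k, c n k <= / (INR k + 1)).
  { intros n k. unfold c. pose proof (to_nat_non_decreasing n k) as H.
    apply le_INR in H. rewrite plus_INR in H. pose proof (pos_INR n). pose proof (pos_INR k).
    apply Rinv_le_contravar; lra. }
  pose (hf := fun n k x => (if excluded_middle_informative (C n k x) then 0 else 1) + c n k).
  assert (Hhf : forall n k, continuous T (hf n k)).
  { intros n k U HU. unfold hf.
    apply (open_ext T (fun x => U (if excluded_middle_informative (C n k x) then c n k else 1 + c n k))).
    - intros x. destruct (excluded_middle_informative (C n k x)); rewrite ?Rplus_0_l; tauto.
    - apply cont_ind; auto. }
  pose (h := fun n k => exist (continuous T) (hf n k) (Hhf n k) : Cp T).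
  assert (Hinj : forall n k n' k', h n k = h n' k' -> n = n' /\ k = k').
  { intros n k n' k' Heq. apply (f_equal (fun f : Cp T => proj1_sig f x0)) in Heq.
    simpl in Heq. unfold hf in Heq.
    assert (Hcc : c n k = c n' k').
    { pose proof (Hc n k). pose proof (Hc n' k').
      destruct (excluded_middle_informative (C n k x0));
      destruct (excluded_middle_informative (C n' k' x0)); lra. }
    unfold c in Hcc. apply Rinv_eq_reg in Hcc. apply Rplus_eq_reg_r in Hcc.
    apply INR_eq in Hcc. apply (f_equal of_nat) in Hcc. rewrite !cancel_of_to in Hcc.
    inversion Hcc; auto. }
  pose (y0 := exist (continuous T) (fun _ => 0) (cont_const T 0) : Cp T).
  destruct (Ha y0 (fun n z => exists k, h n k = z)) as [B [HB1 HB2]].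
  - intros n. exists (h n). split; [|split].
    + intros k k' H. apply Hinj in H. tauto.
    + intros z. tauto.
    + intros V HV Hy. destruct (HV y0 Hy) as [xs [eps [Heps Hxs]]].
      destruct (list_eventually (fun k x => Rabs (hf n k x - 0) < eps) xs) as [K HK].
      * intros x _. destruct (Hlim n x) as [K1 HK1]. destruct (small_eventually eps Heps) as [K2 HK2].
        exists (Nat.max K1 K2). intros k Hk. unfold hf.
        destruct (excluded_middle_informative (C n k x)) as [Hin|Hin];
          [|exfalso; apply Hin, HK1; lia].
        rewrite Rplus_0_l, Rminus_0_r. pose proof (Hc n k). rewrite Rabs_right by lra.
        pose proof (Hck n k). pose proof (HK2 k ltac:(lia)). lra.
      * exists K. intros k Hk. apply Hxs. intros x Hx. apply (HK k Hk x Hx).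
  - assert (HBk : forall n, exists K, forall k, (K <= k)%nat -> B n (h n k)).
    { intros n. destruct (HB1 n) as [Hsub [l Hl]].
      destruct (inj_avoid_list (h n) l) as [K HK].
      { intros k k' H. apply Hinj in H. tauto. }
      exists K. intros k Hk. apply NNPP. intros Hn. apply (HK k Hk). apply Hl; eauto. }
    pose (g := fun n => proj1_sig (constructive_indefinite_description _ (HBk n))).
    assert (Hg : forall n k, (g n <= k)%nat -> B n (h n k)).
    { intros n. unfold g. destruct (constructive_indefinite_description _ (HBk n)); auto. }
    exists g. intros x.
    destruct HB2 as [e [einj [eU econv]]].
    destruct (econv _ (cp_open_ball T x y0 (/2))) as [N0 HN0].
    { simpl. rewrite Rminus_0_r, Rabs_R0. lra. }
    destruct (pigeon N0 (fun n => exists k, (g n <= k)%nat /\ ~ C n k x)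
                (fun n i => exists k, (g n <= k)%nat /\ ~ C n k x /\ e i = h n k)) as [M HM].
    + intros n [k [Hk HCk]].
      destruct (proj1 (eU (h n k))) as [i Hi]; [exists n; apply Hg; auto|].
      exists i. split; [|exists k; auto].
      destruct (Nat.lt_ge_cases i N0) as [Hlt|Hge]; auto. exfalso.
      specialize (HN0 i Hge). rewrite Hi in HN0. simpl in HN0. unfold hf in HN0.
      destruct (excluded_middle_informative (C n k x)); [contradiction|].
      pose proof (Hc n k). rewrite Rminus_0_r, Rabs_right in HN0 by lra. lra.
    + intros n n' i [k [_ [_ H1]]] [k' [_ [_ H2]]]. rewrite H1 in H2. apply Hinj in H2. tauto.
    + exists M. intros n Hn k Hk. apply NNPP. intros Hc'. apply (HM n Hn). eauto.
Qed.

Lemma R_open_ball (a r : R) : R_open (fun z => Rabs (z - a) < r).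
Proof.
  intros z Hz. exists (r - Rabs (z - a)). split; [lra|]. intros w Hw.
  pose proof (Rabs_triang (w - z) (z - a)). replace (w - z + (z - a)) with (w - a) in H by ring. lra.
Qed.

Lemma open_dist {X} (T : topology X) (f g : X -> R) (d : R) :
  continuous T f -> continuous T g -> open T (fun x => Rabs (f x - g x) < d).
Proof.
  intros Hf Hg.
  apply (open_ext T (fun x => exists W, (fun W => exists a r s, 0 < r /\ 0 < s /\ r + s <= d /\
      W = (fun x => Rabs (f x - a) < r /\ Rabs (g x - a) < s)) W /\ W x)).
  - intros x; split.
    + intros [W [[a [r [s [Hr [Hs [Hrs ->]]]]]] [H1 H2]]].
      pose proof (Rabs_triang (f x - a) (a - g x)). rewrite Rabs_minus_sym in H2.
      replace (f x - a + (a - g x)) with (f x - g x) in H by ring. lra.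
    + intros H. set (e := Rabs (f x - g x)) in *.
      exists (fun z => Rabs (f z - f x) < (d - e)/2 /\ Rabs (g z - f x) < e + (d - e)/2).
      split.
      * exists (f x), ((d-e)/2), (e + (d-e)/2). pose proof (Rabs_pos (f x - g x)).
        fold e in H0. repeat split; try lra.
      * split. replace (f x - f x) with 0 by ring. rewrite Rabs_R0. lra.
        rewrite Rabs_minus_sym. fold e. lra.
  - apply open_union. intros W [a [r [s [Hr [Hs [Hrs ->]]]]]].
    apply open_inter; [apply (Hf _ (R_open_ball a r))|apply (Hg _ (R_open_ball a s))].
Qed.

Lemma pointwise_conv {X} (T : topology X) (e : nat -> Cp T) (y : Cp T) :
  seq_converges (cp_open T) e y -> forall x d, 0 < d ->
  exists K, forall k, (K <= k)%nat -> Rabs (proj1_sig (e k) x - proj1_sig y x) < d.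
Proof.
  intros Hc x d Hd. apply (Hc _ (cp_open_ball T x y d)).
  rewrite Rminus_diag, Rabs_R0; auto.
Qed.

Lemma P_alpha1 {X} (T : topology X) :
  (forall Psi : X -> nat -> nat, borel_function T Psi ->
     baire_bounded (fun f : nat -> nat => exists x : X, Psi x = f)) ->
  alpha1 (cp_open T).
Proof.
  intros Hb y A HA.
  pose (en := fun n => proj1_sig (constructive_indefinite_description _ (HA n))).
  assert (Hen : forall n, (forall m k, en n m = en n k -> m = k) /\
      (forall z, A n z <-> exists k, en n k = z) /\ seq_converges (cp_open T) (en n) y).
  { intros n. unfold en. destruct (constructive_indefinite_description _ (HA n)); auto. }
  pose (Q := fun n m x => forall k, (m <= k)%nat ->
        Rabs (proj1_sig (en n k) x - proj1_sig y x) < / (INR n + 1)).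
  assert (HQmono : forall n m x, Q n m x -> Q n (S m) x).
  { intros n m x H k Hk. apply H. lia. }
  assert (HQex : forall x n, exists m, Q n m x /\ forall k, Q n k x -> (m <= k)%nat).
  { intros x n. apply least_ex. apply (pointwise_conv T _ _ (proj2 (proj2 (Hen n))) x).
    pose proof (pos_INR n). apply Rinv_0_lt_compat. lra. }
  pose (Psi := fun x n => proj1_sig (constructive_indefinite_description _ (HQex x n))).
  assert (HPsi : forall x n, Q n (Psi x n) x /\ forall k, Q n k x -> (Psi x n <= k)%nat).
  { intros x n. unfold Psi. destruct (constructive_indefinite_description _ (HQex x n)); auto. }
  assert (HQb : forall n m, borel T (Q n m)).
  { intros n m.
    apply (borel_ext T (fun x => ~ exists k, (fun k x => (m <= k)%nat /\
        ~ Rabs (proj1_sig (en n k) x - proj1_sig y x) < / (INR n + 1)) k x)).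
    - intros x. unfold Q. split.
      + intros H k Hk. apply NNPP. intros H'. apply H. eauto.
      + intros H [k [Hk H']]. auto.
    - apply borel_compl, borel_cunion. intros k.
      destruct (Compare_dec.le_dec m k) as [Hmk|Hmk].
      + eapply borel_ext; [|apply borel_compl, borel_open, (open_dist T (proj1_sig (en n k)) (proj1_sig y) (/ (INR n + 1)));
           [apply (proj2_sig (en n k))|apply (proj2_sig y)]].
        intros x; simpl. tauto.
      + eapply borel_ext; [|apply borel_empty]. intros x; simpl; tauto. }
  assert (HPsiB : borel_function T Psi).
  { apply borel_function_crit. intros n v.
    apply (borel_ext T (fun x => Q n v x /\ match v with O => True | S w => ~ Q n w x end)).
    - intros x. destruct (HPsi x n) as [H1 H2]. split.
      + intros [Hq Hv]. apply Nat.le_antisymm; [apply H2; auto|].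
        destruct v as [|w]; [lia|].
        destruct (Nat.le_gt_cases (S w) (Psi x n)) as [Hl|Hl]; auto. exfalso. apply Hv.
        assert (forall d, Q n (Psi x n + d)%nat x) as Hd.
        { induction d. rewrite Nat.add_0_r; auto. rewrite Nat.add_succ_r; auto. }
        replace w with (Psi x n + (w - Psi x n))%nat by lia. apply Hd.
      + intros <-. split; auto. destruct (Psi x n) as [|w] eqn:E; auto.
        intros Hw. specialize (H2 w Hw). lia.
    - apply borel_inter; auto. destruct v; [apply borel_full|apply borel_compl; auto]. }
  destruct (Hb Psi HPsiB) as [G HG].
  exists (fun n z => exists k, (G n <= k)%nat /\ en n k = z). split.
  - intros n. split.
    + intros z [k [_ Hk]]. apply (proj1 (proj2 (Hen n))). eauto.
    + exists (map (en n) (seq 0 (G n))). intros z Hz Hnb.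
      destruct (proj1 (proj1 (proj2 (Hen n)) z) Hz) as [k Hk].
      destruct (Nat.lt_ge_cases k (G n)) as [Hl|Hl]; [|exfalso; apply Hnb; eauto].
      rewrite <- Hk. apply in_map. apply in_seq. lia.
  - set (U := fun z => exists n, exists k, (G n <= k)%nat /\ en n k = z).
    destruct (inj_enum U (fun m => en (fst (of_nat m)) (G (fst (of_nat m)) + snd (of_nat m))%nat)
                (fun j => en O (G O + j)%nat)) as [e [einj eU]].
    + intros m. exists (fst (of_nat m)), (G (fst (of_nat m)) + snd (of_nat m))%nat. split; auto; lia.
    + intros u [n [k [Hk <-]]]. exists (to_nat (n, (k - G n)%nat)). rewrite cancel_of_to. simpl.
      f_equal. lia.
    + intros j. exists O, (G O + j)%nat. split; auto; lia.
    + intros i j H. apply (proj1 (Hen O)) in H. lia.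
    + exists e. split; [auto|split; [auto|]].
      intros V HV Hy. destruct (HV y Hy) as [xs [eps [Heps Hxs]]].
      assert (Hbad1 : forall x, exists l, forall u, U u ->
                 ~ Rabs (proj1_sig u x - proj1_sig y x) < eps -> In u l).
      { intros x. destruct (HG (Psi x) (ex_intro _ x eq_refl)) as [Nx HNx].
        destruct (small_eventually eps Heps) as [n0 Hn0].
        set (M := Nat.max Nx n0).
        destruct (list_eventually (fun k n => Rabs (proj1_sig (en n k) x - proj1_sig y x) < eps)
                    (seq 0 M)) as [K HK].
        { intros n _. apply (pointwise_conv T _ _ (proj2 (proj2 (Hen n))) x eps Heps). }
        exists (flat_map (fun n => map (en n) (seq 0 K)) (seq 0 M)).
        intros u [n [k [Hk <-]]] Hbad. apply in_flat_map. exists n.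
        destruct (Nat.lt_ge_cases n M) as [HnM|HnM].
        - split; [apply in_seq; lia|]. apply in_map. apply in_seq.
          destruct (Nat.lt_ge_cases k K) as [HkK|HkK]; [lia|].
          exfalso. apply Hbad. apply (HK k HkK). apply in_seq; lia.
        - exfalso. apply Hbad. destruct (HPsi x n) as [H1 _].
          specialize (HNx n ltac:(lia)).
          apply Rlt_trans with (/ (INR n + 1)); [apply H1; lia|]. apply Hn0. lia. }
      assert (Hbad : exists l, forall u, U u ->
          (exists x, In x xs /\ ~ Rabs (proj1_sig u x - proj1_sig y x) < eps) -> In u l).
      { clear Hxs. induction xs as [|a xs IH].
        - exists nil. intros u _ [x [[] _]].
        - destruct IH as [l Hl]. destruct (Hbad1 a) as [l' Hl'].
          exists (l' ++ l). intros u Hu [x [[<-|Hx] H]]; apply in_or_app; [left|right]; eauto. }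
      destruct Hbad as [l Hl]. destruct (inj_avoid_list e l einj) as [K HK].
      exists K. intros k Hk. apply Hxs. intros x Hx. apply NNPP. intros Hn.
      apply (HK k Hk). apply Hl; [apply eU; eauto|eauto].
Qed.

Theorem mainTheorem4 (X : Type) (T : topology X)
  (HX : open_countable_union_clopen T) :
  alpha1 (cp_open T) <->
  (forall Psi : X -> nat -> nat, borel_function T Psi ->
     baire_bounded (fun f : nat -> nat => exists x : X, Psi x = f)).
Proof.
  split.
  - intros Ha. apply bounded_from_P; auto. apply alpha1_P; auto.
  - apply P_alpha1.
Qed.
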